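(* Let $k$ be a field and $p$ a prime different from $\operatorname{char}k$. Assume $k^*\neq (k^* )^p$, and, if $\mu_p\subset k$, assume that $k^*/(k^* )^p$ is not cyclic. Then for every finite cyclic extension $K/k$ and every $s\in\mathbb{N}$ there exists $a\in k^*$ such that $x^{p^s}-a$ is irreducible over $K$.
   Context: $k^*$ is the multiplicative group of $k$, $(k^* )^p$ the subgroup of $p$-th powers. $\mu_p\subset k$ means $k$ contains all $p$-th roots of unity of its algebraic closure. *)

(* Defs.v *)
From HB Require Import structures.
From mathcomp Require Import all_boot all_order all_fingroup all_algebra all_solvable all_field.
Set Implicit Arguments. Unset Strict Implicit. Unset Printing Implicit Defensive.
Import GRing.Theory.
Local Open Scope ring_scope.

Definition not_all_pth_powers (k : fieldType) (p : nat) : Prop :=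
  exists x : k, x != 0 /\ forall y : k, y ^+ p != x.

Definition contains_pth_roots_of_unity (k : fieldType) (p : nat) : Prop :=
  exists s : seq k, ('X^p - 1 : {poly k}) = \prod_(z <- s) ('X - z%:P).

Definition units_mod_pth_powers_cyclic (k : fieldType) (p : nat) : Prop :=
  exists g : k, g != 0 /\
    forall x : k, x != 0 -> exists (n : nat) (y : k), y != 0 /\ x = g ^+ n * y ^+ p.

(* Main.v *)
Require Import Defs.
From HB Require Import structures.
From mathcomp Require Import all_boot all_order all_fingroup all_algebra all_solvable all_field.
From Stdlib Require Import Classical.
From mathcomp Require Import ring zify.
Import GRing.Theory.
Local Open Scope ring_scope.

Lemma det_expmx (R : comNzRingType) n (A : 'M[R]_n.+1) e : \det (A ^+ e) = \det A ^+ e.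
Proof.
elim: e => [|e IH]; first by rewrite !expr0 det1.
by rewrite !exprS det_mulmx IH.
Qed.

Lemma companion_exists {R : comNzRingType} {m : {poly R}} :
  m \is monic -> (1 < size m)%N ->
  exists n (C : 'M[R]_n.+1), char_poly C = m /\ n.+1 = (size m).-1.
Proof.
move=> mon sz; have := companionmxK mon; move: (companionmx m).
have : (0 < (size m).-1)%N by rewrite -ltnS prednK // ltnW.
case: (size m).-1 => [//|n] _ C HC.
by exists n, C.
Qed.

Lemma hmx_dvd {R : fieldType} {n} {C : 'M[R]_n.+1} {u v : {poly R}} :
  char_poly C %| u - v -> horner_mx C u = horner_mx C v.
Proof.
case/dvdpP => q Hq; apply/eqP; rewrite -subr_eq0 -rmorphB Hq rmorphM /=.
by rewrite Cayley_Hamilton mulr0.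
Qed.

Lemma PL1 {R : fieldType} {m : {poly R}} {c : R} {e} :
  m \is monic -> (1 < size m)%N -> m %| 'X^e - c%:P ->
  exists t : R, t ^+ e = c ^+ (size m).-1.
Proof.
move=> mon sz dv; have [n [C [HC Hn]]] := companion_exists mon sz.
rewrite -HC in dv; have := hmx_dvd dv.
rewrite rmorphXn /= horner_mx_X horner_mx_C => /(congr1 determinant).
rewrite det_expmx det_scalar -Hn => H; by exists (\det C).
Qed.

Lemma PL2 {R : fieldType} {c : R} {g : {poly R}} {e} :
  (0 < e)%N -> ('X^e - c%:P) %| g ^+ e - 'X ->
  exists t : R, t ^+ e = (-1) ^+ e * - c.
Proof.
move=> e0 dv.
have mon : 'X^e - c%:P \is monic by apply: monicXnsubC.
have sz : size ('X^e - c%:P) = e.+1 by apply: size_XnsubC.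
have sz1 : (1 < size ('X^e - c%:P)%R)%N by rewrite sz ltnS.
have [n [C [HC Hn]]] := companion_exists mon sz1.
rewrite -HC in dv; have := hmx_dvd dv.
rewrite rmorphXn /= horner_mx_X => /(congr1 determinant).
rewrite det_expmx => H; exists (\det (horner_mx C g)); rewrite H.
have := char_poly_det C; rewrite HC coefB coefXn coefC /=.
have E : (-1) ^+ n.+1 = (-1) ^+ e :> R by rewrite Hn sz.
rewrite eq_sym eqn0Ngt e0 /= sub0r E => ->.
by rewrite mulrA -exprD -signr_odd oddD addbb expr0 mul1r.
Qed.

Section Inner.
Variables (F0 : fieldType) (L : fieldExtType F0) (p : nat) (pr : prime p).

Lemma deg_p (K : {subfield L}) (g c : L) : c \in K -> g ^+ p = c ->
  (forall b, b \in K -> b ^+ p != c) -> adjoin_degree K g = p.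
Proof.
move=> cK gpc npow.
have p0 : (0 < p)%N := prime_gt0 pr.
have c0 : c != 0.
  apply: contraNneq (npow 0 (rpred0 K)) => ->.
  by rewrite expr0n eqn0Ngt p0.
set d := adjoin_degree K g.
have Xp : 'X^p - c%:P \is a polyOver K by rewrite rpredB ?rpredX ?polyOverX ?polyOverC.
have rt : root ('X^p - c%:P) g by rewrite /root !hornerE gpc subrr.
have dv := minPoly_dvdp Xp rt.
have [m' Hm] : exists m' : {poly subvs_of K}, minPoly K g = map_poly vsval m'.
  by apply/(@polyOver_subvs _ _ K); exact: minPolyOver.
set c' := vsproj K c; have Hc : vsval c' = c := vsprojK cK.
have dv' : m' %| 'X^p - c'%:P.
  by rewrite -(dvdp_map vsval) -Hm rmorphB /= map_polyXn map_polyC /= Hc.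
have mon' : m' \is monic by rewrite -(map_monic vsval) -Hm monic_minPoly.
have sz' : size m' = d.+1 by rewrite -(size_map_poly vsval) -Hm size_minPoly.
have d0 : (0 < d)%N by rewrite /d /adjoin_degree.
have sz1 : (1 < size m')%N by rewrite sz' ltnS.
have [t Ht] := PL1 mon' sz1 dv'.
rewrite sz' /= in Ht.
have dle : (d <= p)%N.
  have := dvdp_leq (monic_neq0 (monicXnsubC c p0)) dv.
  by rewrite size_minPoly size_XnsubC // ltnS.
have [dlt|pd] := ltnP d p; last by apply/eqP; rewrite eqn_leq dle pd.
have cop : coprime d p.
  rewrite coprime_sym prime_coprime //; apply/negP => /(dvdn_leq d0).
  by rewrite leqNgt dlt.
case: (egcdnP p d0) => km kn Hk _.
rewrite (eqP cop) in Hk.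
have Ht' : (vsval t) ^+ p = c ^+ d by rewrite -rmorphXn Ht rmorphXn /= Hc.
exfalso.
have bK : (vsval t ^+ km / c ^+ kn) \in K by rewrite rpred_div ?rpredX ?subvsP.
move: (npow _ bK).
suff -> : (vsval t ^+ km / c ^+ kn) ^+ p = c by rewrite eqxx.
rewrite exprMn exprVn -!exprM mulnC exprM Ht' -exprM mulnC Hk exprD expr1.
by rewrite mulrAC mulfV ?mul1r // expf_neq0.
Qed.


Lemma minPoly_eqX (K : {subfield L}) (g c : L) : c \in K -> g ^+ p = c ->
  adjoin_degree K g = p -> minPoly K g = 'X^p - c%:P.
Proof.
move=> cK gpc adg; have p0 : (0 < p)%N := prime_gt0 pr.
have Xp : 'X^p - c%:P \is a polyOver K by rewrite rpredB ?rpredX ?polyOverX ?polyOverC.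
have rt : root ('X^p - c%:P) g by rewrite /root !hornerE gpc subrr.
have dv := minPoly_dvdp Xp rt.
apply/eqP; rewrite -eqp_monic ?monic_minPoly ?monicXnsubC //.
by rewrite -dvdp_size_eqp // size_minPoly size_XnsubC // adg.
Qed.

Lemma nonpow_odd (K : {subfield L}) (g c : L) : c \in K -> g ^+ p = c ->
  adjoin_degree K g = p -> odd p -> (forall b, b \in K -> b ^+ p != c) ->
  forall d, d \in <<K; g>>%VS -> d ^+ p != g.
Proof.
move=> cK gpc adg oddp npow d dM; have p0 : (0 < p)%N := prime_gt0 pr.
apply/eqP => dpg.
set f := Fadjoin_poly K g d.
have Hf : f.[g] = d := Fadjoin_poly_eq dM.
have fO : f \is a polyOver K := Fadjoin_polyOver K g d.
have [f' Hf'] : exists f' : {poly subvs_of K}, f = map_poly vsval f'.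
  by apply/(@polyOver_subvs _ _ K).
have P1 : f ^+ p - 'X \is a polyOver K by rewrite rpredB ?rpredX ?polyOverX.
have rt : root (f ^+ p - 'X) g by rewrite /root !hornerE Hf dpg subrr.
have dv := minPoly_dvdp P1 rt; rewrite (minPoly_eqX K g c cK gpc adg) in dv.
set c' := vsproj K c; have Hc : vsval c' = c := vsprojK cK.
have dv' : 'X^p - c'%:P %| f' ^+ p - 'X.
  rewrite -(dvdp_map vsval) rmorphB /= map_polyXn map_polyC /= Hc.
  by rewrite rmorphB rmorphXn /= map_polyX -Hf'.
have [t Ht] := PL2 p0 dv'.
rewrite -signr_odd oddp expr1 mulN1r opprK in Ht.
have := npow (vsval t) (subvsP t).
by rewrite -rmorphXn Ht /= Hc eqxx.
Qed.

Lemma nonpow_two (K : {subfield L}) (g c : L) : c \in K -> g ^+ 2 = c ->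
  g \notin K -> forall e d, e ^+ 2 = 1 -> d \in <<K; g>>%VS -> d ^+ 2 = e * g ->
  exists2 x0, x0 \in K & c = - 4 * x0 ^+ 4.
Proof.
move=> cK gc gK e d e2 dM de.
have X2 : 'X^2 - c%:P \is a polyOver K by rewrite rpredB ?rpredX ?polyOverX ?polyOverC.
have rt : root ('X^2 - c%:P) g by rewrite /root !hornerE gc subrr.
have dv := minPoly_dvdp X2 rt.
have adle : (adjoin_degree K g <= 2)%N.
  have := dvdp_leq (monic_neq0 (monicXnsubC c (isT : (0 < 2)%N))) dv.
  by rewrite size_minPoly size_XnsubC // ltnS.
set f := Fadjoin_poly K g d.
have Hf : f.[g] = d := Fadjoin_poly_eq dM.
have fO : f \is a polyOver K := Fadjoin_polyOver K g d.
have szf : (size f <= 2)%N := leq_trans (size_Fadjoin_poly K g d) adle.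
rewrite (horner_coef_wide _ szf) !big_ord_recl big_ord0 /= in Hf.
have x0K : f`_0 \in K by apply: (polyOverP fO).
have x1K : f`_1 \in K by apply: (polyOverP fO).
set x0 := f`_0 in Hf x0K; set x1 := f`_1 in Hf x1K.
have eK : e \in K.
  move/eqP: e2; rewrite sqrf_eq1 => /orP [] /eqP ->; by rewrite ?rpred1 ?rpredN1.
have E : (x0 ^+ 2 + x1 ^+ 2 * c) + (2 * x0 * x1 - e) * g = 0.
  have : d ^+ 2 - e * g = 0 by rewrite de subrr.
  rewrite -Hf -gc => <-.
  rewrite /bump /=. ring.
have uK : x0 ^+ 2 + x1 ^+ 2 * c \in K by rewrite rpredD ?rpredM ?rpredX.
have vK : 2 * x0 * x1 - e \in K by rewrite rpredB ?rpredM ?rpred_nat.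
have v0 : 2 * x0 * x1 - e = 0.
  apply/eqP; apply: contraNT gK => v0.
  have -> : g = - (x0 ^+ 2 + x1 ^+ 2 * c) / (2 * x0 * x1 - e).
    apply: (mulIf v0); rewrite mulfVK // mulrC; apply/eqP; rewrite -subr_eq0 opprK.
    by rewrite addrC E.
  by rewrite rpred_div ?rpredN.
rewrite v0 mul0r addr0 in E.
exists x0 => //.
have : 4 * x0 ^+ 2 * (x0 ^+ 2 + x1 ^+ 2 * c) = 0 by rewrite E mulr0.
have -> : 4 * x0 ^+ 2 * (x0 ^+ 2 + x1 ^+ 2 * c) = 4 * x0 ^+ 4 + (2 * x0 * x1) ^+ 2 * c by ring.
move/eqP: v0; rewrite subr_eq0 => /eqP ->; rewrite e2 mul1r => /eqP.
by rewrite addrC addr_eq0 => /eqP ->; rewrite mulNr.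
Qed.


Lemma capelli_in s : forall (K : {subfield L}) (x c : L), c \in K ->
  x ^+ (p ^ s) = c -> (forall b, b \in K -> b ^+ p != c) ->
  (p = 2 -> forall b, b \in K -> c != - 4 * b ^+ 4) ->
  adjoin_degree K x = (p ^ s)%N.
Proof.
elim: s => [|s IH] K x c cK xc npow n4.
  rewrite expn0 expr1 in xc; rewrite expn0; apply/eqP.
  by rewrite adjoin_deg_eq1 xc.
set g := x ^+ (p ^ s).
have gp : g ^+ p = c by rewrite -exprM -expnSr xc.
have adg := deg_p K g c cK gp npow.
pose M := <<K; g>>%AS.
have gM : g \in M := memv_adjoin K g.
have gK : g \notin K.
  rewrite -adjoin_deg_eq1 adg; apply/eqP => p1.
  by move: (prime_gt1 pr); rewrite p1.
have [H1 H2] : (forall b, b \in M -> b ^+ p != g) /\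
               (p = 2 -> forall b, b \in M -> g != - 4 * b ^+ 4).
  have [p2|p2] := eqVneq p 2.
    rewrite p2 in gp.
    split => [b bM|_ b bM].
      rewrite p2; apply/eqP => bg.
      have bg' : b ^+ 2 = 1 * g by rewrite bg mul1r.
      have [x0 x0K cx] := nonpow_two K g c cK gp gK 1 b (expr1n _ _) bM bg'.
      by move: (n4 p2 x0 x0K); rewrite cx eqxx.
    apply/eqP => bg.
    have bM' : 2 * b ^+ 2 \in M by rewrite rpredM ?rpredX ?rpred_nat.
    have e2 : (-1 : L) ^+ 2 = 1 by rewrite sqrrN expr1n.
    have bg' : (2 * b ^+ 2) ^+ 2 = -1 * g by rewrite bg; ring.
    have [x0 x0K cx] := nonpow_two K g c cK gp gK (-1) (2 * b ^+ 2) e2 bM' bg'.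
    by move: (n4 p2 x0 x0K); rewrite cx eqxx.
  have oddp : odd p by case: (even_prime pr) => // /eqP; rewrite (negPf p2).
  split; first exact: nonpow_odd K g c cK gp adg oddp npow.
  by move=> /eqP; rewrite (negPf p2).
have adx := IH M x g gM erefl H1 H2.
have EE : <<M; x>>%VS = <<K; x>>%VS.
  apply/subv_anti/andP; split.
    apply/FadjoinP; split; last exact: memv_adjoin.
    apply/FadjoinP; split; first exact: subv_adjoin.
    by rewrite rpredX // memv_adjoin.
  apply/FadjoinP; split; last exact: memv_adjoin.
  exact: subv_trans (subv_adjoin K g) (subv_adjoin M x).
have := dim_Fadjoin M x; rewrite EE dim_Fadjoin adx /M /= dim_Fadjoin adg mulnA.
move/eqP; rewrite eqn_pmul2r ?adim_gt0 // => /eqP ->.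
by rewrite expnSr.
Qed.

End Inner.

Section QF.
Variables (F : fieldType) (h : {poly F}) (hI : monic_irreducible_poly h).
Local Notation E := {poly %/ h with hI}.

Lemma qpolyC_alg (k : F) : (qpolyC h k : E) = k%:A.
Proof.
by apply: val_inj; rewrite /= alg_polyC.
Qed.

Lemma horner_qX (q : {poly F}) :
  (map_poly (in_alg E) q).[in_qpoly h 'X : E] = in_qpoly h q.
Proof.
rewrite -{2}(comp_polyXr q) in_qpoly_comp_horner.
congr (_.[_]); apply: eq_map_poly => k /=; by rewrite qpolyC_alg.
Qed.

End QF.

Lemma irr_factor {F : fieldType} {q : {poly F}} : (1 < size q)%N ->
  exists f, [/\ irreducible_poly f, f \is monic & f %| q].
Proof.
move: {2}(size q) (leqnn (size q)) => n; elim: n q => [|n IH] q szn sz1.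
  by move: (leq_trans sz1 szn).
have q0 : q != 0 by rewrite -size_poly_gt0 (ltn_trans _ sz1).
have lq0 : lead_coef q != 0 by rewrite lead_coef_eq0.
case: (classic (irreducible_poly q)) => [irr|nirr].
  exists ((lead_coef q)^-1 *: q); split.
  - split; first by rewrite size_scale ?invr_eq0.
    move=> d d1 dd; have eq1 : (lead_coef q)^-1 *: q %= q by rewrite eqp_scale ?invr_eq0.
    have dq : d %| q by rewrite -(eqp_dvdr _ eq1).
    have := irr _ d1 dq.
    by move=> H; apply: eqp_trans H _; rewrite eqp_sym.
  - by rewrite monicE lead_coefZ mulVf.
  - by rewrite dvdpZl ?invr_eq0.
have [d Hd] : exists d : {poly F}, ~ (size d != 1%N -> d %| q -> d %= q).
  apply: not_all_ex_not => H; apply: nirr; split => //.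
have [d1 Hd2] := imply_to_and _ _ Hd.
have [dq nd'] := imply_to_and _ _ Hd2.
have nd : ~~ (d %= q) by apply/negP.
have d0 : d != 0 by apply: contraNneq q0 => d0; rewrite -dvd0p -d0.
have szd : (size d < size q)%N.
  rewrite ltn_neqAle dvdp_leq // andbT; apply: contra nd => /eqP E.
  by rewrite -dvdp_size_eqp // E.
have sd1 : (1 < size d)%N.
  by rewrite ltn_neqAle eq_sym d1 /= size_poly_gt0.
have [f [fi fm fd]] := IH d (leq_trans (ltnSE (leq_trans szd szn)) (leqnn _)) sd1.
by exists f; split => //; apply: dvdp_trans fd dq.
Qed.

Lemma in_qpoly_self {F : fieldType} {f : {poly F}} (hI : monic_irreducible_poly f) :
  in_qpoly f f = 0.
Proof.
apply: val_inj => /=; rewrite (mk_monicE hI).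
by rewrite Pdiv.RingMonic.rmodpp //; case: hI.
Qed.

Lemma capelli (F : fieldType) (p : nat) (c : F) (s : nat) : prime p ->
  (forall b : F, b ^+ p != c) -> (p = 2 -> forall b : F, c != - 4 * b ^+ 4) ->
  irreducible_poly ('X^(p ^ s) - c%:P).
Proof.
move=> pr npow n4.
set n := (p ^ s)%N; have n0 : (0 < n)%N by rewrite expn_gt0 prime_gt0.
set P := 'X^n - c%:P.
have szP : size P = n.+1 := size_XnsubC c n0.
split; first by rewrite szP ltnS.
move=> q q1 qP.
have P0 : P != 0 := monic_neq0 (monicXnsubC c n0).
have q0 : q != 0 by apply/eqP => q0; move: qP; rewrite q0 dvd0p (negPf P0).
have szq : (1 < size q)%N by rewrite ltn_neqAle eq_sym q1 size_poly_gt0.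
have [f [fi fm fq]] := irr_factor szq.
have hI : monic_irreducible_poly f := (fi, fm).
pose E := {poly %/ f with hI}.
pose a : E := in_qpoly f 'X.
have fP : f %| P := dvdp_trans fq qP.
have Ha : a ^+ n = c%:A.
  have := horner_qX _ _ hI P.
  have [r Pr] : exists r, P = r * f by apply/dvdpP.
  have -> : in_qpoly f P = 0 by rewrite Pr rmorphM /= (in_qpoly_self hI) mulr0.
  rewrite /P rmorphB /= map_polyXn map_polyC /=.
  by rewrite !hornerE => /eqP; rewrite subr_eq0 => /eqP.
have in1 : forall b : E, b \in (1%AS : {subfield E}) -> exists k : F, b = k%:A.
  by move=> b /vlineP [k ->]; exists k.
have adg : adjoin_degree (1%AS : {subfield E}) a = n.
  apply: (@capelli_in F E p pr s 1%AS a (c%:A)) => //.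
  - by rewrite rpredZ // mem1v.
  - move=> b /in1 [k ->].
    by rewrite exprZn expr1n (inj_eq (@fmorph_inj _ _ (in_alg E))).
  - move=> p2 b /in1 [k ->].
    have -> : - 4 * (k%:A : E) ^+ 4 = (- 4 * k ^+ 4)%:A.
      rewrite exprZn expr1n.
      by rewrite -scalerA scaleNr scaler_nat mulNr mulr_natl.
    by rewrite (inj_eq (@fmorph_inj _ _ (in_alg E))) n4.
have rt : root (map_poly (in_alg E) f) a by rewrite /root (horner_qX _ _ hI) (in_qpoly_self hI).
have dv := minPoly_dvdp (alg_polyOver 1%AS f) rt.
have szf : (n.+1 <= size f)%N.
  have := dvdp_leq _ dv; rewrite size_minPoly adg size_map_poly; apply.
  by rewrite map_poly_eq0 monic_neq0.
rewrite -dvdp_size_eqp // eqn_leq dvdp_leq //= szP.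
exact: leq_trans szf (dvdp_leq q0 fq).
Qed.

Section Gal.
Variables (k : fieldType) (K : splittingFieldType k).
Variable g : gal_of {:K}.
Hypothesis galK : galois 1 {:K}.
Hypothesis gen : ('Gal({:K} / 1))%g = <[g]>%g.

Lemma gfix_alg (t : k) : g (t%:A) = t%:A.
Proof. by rewrite linearZ /= rmorph1. Qed.

Lemma gfixed {x : K} : g x = x -> exists t : k, x = t%:A.
Proof.
move=> gx.
have : x \in fixedField ('Gal({:K} / 1))%g.
  apply/fixedFieldP; first exact: memvf.
  rewrite gen => y /cycleP [i ->].
  elim: i => [|i IH]; first by rewrite expg0 gal_id.
  by rewrite expgS galM ?memvf // gx.
rewrite (galois_fixedField galK) => /vlineP [t ->]; by exists t.
Qed.

Lemma gM (x y : K) : g (x * y) = g x * g y.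
Proof. exact: rmorphM. Qed.
Lemma gX (x : K) n : g (x ^+ n) = g x ^+ n.
Proof. exact: rmorphXn. Qed.
Lemma gV (x : K) : g (x^-1) = (g x)^-1.
Proof. exact: fmorphV. Qed.


Lemma algI {s t : k} : s%:A = t%:A :> K -> s = t.
Proof. exact: (fmorph_inj (in_alg K)). Qed.

Lemma algM (s t : k) : (s * t)%:A = s%:A * t%:A :> K.
Proof. exact: (rmorphM (in_alg K)). Qed.
Lemma algX (s : k) n : (s ^+ n)%:A = s%:A ^+ n :> K.
Proof. exact: (rmorphXn (in_alg K)). Qed.

Lemma alg_eq0 (s : k) : (s%:A == 0 :> K) = (s == 0).
Proof. by rewrite -(rmorph0 (in_alg K)) (inj_eq (fmorph_inj (in_alg K))). Qed.

Lemma root_ratio {p : nat} {b : K} {a : k} : b != 0 -> b ^+ p = a%:A ->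
  (g b / b) ^+ p = 1.
Proof.
move=> b0 hb; rewrite exprMn exprVn -gX hb gfix_alg divff //.
by rewrite -hb expf_neq0.
Qed.

Lemma claimA (p : nat) : prime p -> not_all_pth_powers k p ->
  (contains_pth_roots_of_unity k p -> ~ units_mod_pth_powers_cyclic k p) ->
  exists a : k, a != 0 /\ forall b : K, b ^+ p != a%:A.
Proof.
move=> pr [x0 [x00 nx0]] hcyc.
have p0 : (0 < p)%N := prime_gt0 pr.
apply: NNPP => H.
have H' : forall a : k, a != 0 -> exists b : K, b ^+ p = a%:A.
  move=> a a0; apply: NNPP => nb; apply: H; exists a; split => //.
  by move=> b; apply/eqP => e; apply: nb; exists b.
have bnz : forall (b : K) (a : k), a != 0 -> b ^+ p = a%:A -> b != 0.
  move=> b a a0 hb; apply/eqP => b0; move: hb; rewrite b0 expr0n eqn0Ngt p0 /=.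
  by move/eqP; rewrite eq_sym alg_eq0 (negPf a0).
have [b0 hb0] := H' x0 x00.
have b00 := bnz _ _ x00 hb0.
set z := g b0 / b0.
have zp : z ^+ p = 1 := root_ratio b00 hb0.
have gb0 : g b0 = z * b0 by rewrite /z mulfVK.
clearbody z.
have zn0 : z != 0.
  apply/eqP => z0; move: zp; rewrite z0 expr0n eqn0Ngt p0 /= => /eqP.
  by rewrite eq_sym oner_eq0.
have z1 : z != 1.
  apply/eqP => z1; rewrite z1 mul1r in gb0.
  have [t ht] := gfixed gb0.
  move: hb0; rewrite ht -algX => /algI tx.
  by move: (nx0 t); rewrite tx eqxx.
have zprim : p.-primitive_root z.
  case: (prim_order_exists p0 zp) => m zm mp.
  case/primeP: pr => _ /(_ m mp) /orP [/eqP m1|/eqP mp'].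
    by move: (prim_expr_order zm); rewrite m1 expr1 => /eqP; rewrite (negPf z1).
  by rewrite -mp'.
have gzp : (g z) ^+ p = 1 by rewrite -gX zp rmorph1.
case: (prim_rootP zprim gzp) => r hr.
case: (eqVneq (r : nat) 1%N) => [r1 | r1].
  rewrite r1 expr1 in hr.
  have [zk hzk] := gfixed hr.
  have zkprim : p.-primitive_root zk.
    by rewrite -(fmorph_primitive_root (in_alg K)) /= -hzk.
  apply: hcyc.
    exists [seq zk ^+ i | i <- index_iota 0 p].
    by rewrite big_map -(factor_Xn_sub_1 zkprim).
  exists x0; split => // x x0'.
  have [b hb] := H' x x0'.
  have b0' := bnz _ _ x0' hb.
  have [e he] := prim_rootP zprim (root_ratio b0' hb).
  have gb : g b = z ^+ e * b by rewrite -he mulfVK.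
  set y := b / b0 ^+ e.
  have gy : g y = y.
    rewrite /y gM gV gX gb gb0 exprMn invfM mulrA; congr (_ * _).
    by rewrite mulrAC divff ?mul1r // expf_neq0.
  have [t ht] := gfixed gy.
  have t0 : t != 0.
    apply: contraNneq b0' => t0; move: ht; rewrite t0 scale0r /y.
    by move/eqP; rewrite mulf_eq0 invr_eq0 expf_eq0 (negPf b00) andbF orbF.
  exists e, t; split => //.
  apply: algI; rewrite -hb algM !algX -ht -hb0 /y -exprM mulnC exprM.
  by rewrite -exprMn mulrC divfK // expf_neq0.
exfalso.
pose r' := (r + (p - 1))%N.
have r'0 : (0 < r')%N by rewrite /r' addn_gt0 subn_gt0 prime_gt1 ?orbT.
have cop : coprime r' p.
  rewrite coprime_sym prime_coprime //; apply/negP => /dvdnP [q hq].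
  have rp : (r < p)%N := ltn_ord r.
  move: hq; rewrite /r'; case: q => [|[|q]] hq.
  - by move: hq; rewrite mul0n; lia.
  - by move: hq r1; rewrite mul1n; lia.
  - by move: hq; rewrite !mulSn; lia.
case: (egcdnP p r'0) => e kn Hk _; rewrite (eqP cop) in Hk.
have E1 : z ^+ (e * r) * z ^+ (e * (p - 1)) = z.
  by rewrite -exprD -mulnDr -/r' Hk exprD mulnC exprM zp expr1n mul1r expr1.
have E2 : z ^+ (e * (p - 1)) * z ^+ e = 1.
  by rewrite -exprD -{2}(muln1 e) -mulnDr subnK // mulnC exprM zp expr1n.
have E3 : z ^+ (e * r) = z * z ^+ e.
  by rewrite -{1}(mulr1 (z ^+ (e * r))) -E2 mulrA E1.
set b1 := b0 / z ^+ e.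
have gb1 : g b1 = b1.
  rewrite /b1 gM gV gX hr gb0 -exprM mulnC E3 invfM mulrA.
  by rewrite [z * b0 / z]mulrAC mulfV ?mul1r.
have [t ht] := gfixed gb1.
move: (nx0 t); apply/negP/negPn/eqP; apply: algI.
rewrite algX -ht /b1 exprMn exprVn -exprM mulnC exprM zp expr1n invr1 mulr1.
by [].
Qed.


Lemma algN (s : k) : (- s)%:A = - s%:A :> K.
Proof. exact: (rmorphN (in_alg K)). Qed.

Lemma claim2 : 2 \notin [pchar k] -> not_all_pth_powers k 2 ->
  (contains_pth_roots_of_unity k 2 -> ~ units_mod_pth_powers_cyclic k 2) ->
  exists a : k, a != 0 /\ (forall b : K, b ^+ 2 != a%:A) /\
     (forall b : K, a%:A != - 4 * b ^+ 4).
Proof.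
move=> nch nap hcyc.
have two0k : (2%:R : k) != 0.
  by move: nch; rewrite inE /= => ->.
have two0 : (2%:R : K) != 0.
  have E : (2%:R : k)%:A = (2%:R : K) := rmorph_nat (in_alg K) 2.
  by rewrite -E alg_eq0.
have hroots : contains_pth_roots_of_unity k 2.
  exists [:: 1; -1]; rewrite !big_cons big_nil polyCN polyC1 mulr1.
  by rewrite opprK mulrDr !mulrBl mulr1 mul1r expr2; ring.
have ncyc := hcyc hroots.
case: (classic (exists i : K, i ^+ 2 = -1)) => [[i hi]|noi].
  have [a [a0 ha]] := claimA 2 isT nap hcyc.
  exists a; split => //; split => // b; apply/eqP => e.
  move: (ha (i * 2 * b ^+ 2)); rewrite e !exprMn hi.
  have -> : -1 * 2 ^+ 2 * (b ^+ 2) ^+ 2 = -4 * b ^+ 4 :> K by ring.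
  by rewrite eqxx.
case: (classic (exists d : k, d != 0 /\ (exists dl : K, dl ^+ 2 = d%:A) /\
                  forall y : k, y ^+ 2 != d)) => [[d [d0 [[dl hdl] nd]]]|nod].
  have dA0 : d%:A != 0 :> K by rewrite alg_eq0.
  have dl0 : dl != 0 by apply: contraNneq dA0 => dl0; rewrite -hdl dl0 expr0n.
  exists (- d); split; first by rewrite oppr_eq0.
  split => b; apply/eqP => hb.
    apply: noi; exists (b / dl); rewrite exprMn exprVn hb hdl algN mulNr divff //.
  have hd' : (2 * b ^+ 2) ^+ 2 = d%:A.
    by apply: oppr_inj; rewrite -algN hb; ring.
  have b0 : b != 0.
    by apply: contraNneq dA0 => b0; rewrite -hd' b0 expr0n /= mulr0 expr0n.
  have gd : (g (2 * b ^+ 2)) ^+ 2 = (2 * b ^+ 2) ^+ 2 by rewrite -gX hd' gfix_alg.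
  have : (g (2 * b ^+ 2) - 2 * b ^+ 2) * (g (2 * b ^+ 2) + 2 * b ^+ 2) = 0.
    by rewrite -subr_sqr gd subrr.
  move/eqP; rewrite mulf_eq0 => /orP [].
    rewrite subr_eq0 => /eqP /gfixed [t ht].
    have : (t ^+ 2)%:A = d%:A :> K by rewrite algX -ht hd'.
    by move/algI => tdd; move: (nd t); rewrite tdd eqxx.
  rewrite addr_eq0 gM gX rmorph_nat => /eqP hg.
  have hgb : (g b) ^+ 2 = - b ^+ 2.
    by apply: (mulfI two0); rewrite hg mulrN.
  apply: noi; exists (g b / b); rewrite exprMn exprVn hgb mulNr divff //.
  by rewrite expf_neq0.
have hsq : forall d : k, d != 0 -> (exists dl : K, dl ^+ 2 = d%:A) ->
    exists y : k, y ^+ 2 = d.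
  move=> d d0 hd; apply: NNPP => ny; apply: nod; exists d; split => //.
  split => // y; apply/eqP => hy; apply: ny; by exists y.
apply: NNPP => H; apply: ncyc; exists (-1); split; first by rewrite oppr_eq0 oner_eq0.
move=> x x0; apply: NNPP => hx; apply: H; exists x; split => //.
split => b; apply/eqP => hb.
  have [y hy] := hsq x x0 (ex_intro _ b hb).
  apply: hx; exists 0%N, y; split; last by rewrite expr0 mul1r hy.
  by apply: contraNneq x0 => y0; rewrite -hy y0 expr0n.
have mx0 : - x != 0 by rewrite oppr_eq0.
have hb' : (2 * b ^+ 2) ^+ 2 = (- x)%:A by rewrite algN hb; ring.
have [y hy] := hsq (- x) mx0 (ex_intro _ _ hb').
apply: hx; exists 1%N, y; split; last by rewrite expr1 hy mulN1r opprK.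
by apply: contraNneq mx0 => y0; rewrite -hy y0 expr0n.
Qed.

End Gal.

Theorem mainTheorem4 (k : fieldType) (p : nat) :
  prime p -> p \notin [pchar k] ->
  not_all_pth_powers k p ->
  (contains_pth_roots_of_unity k p -> ~ units_mod_pth_powers_cyclic k p) ->
  forall (K : splittingFieldType k),
    galois 1%VS {:K}%VS -> cyclic 'Gal({:K}%VS / 1%VS) ->
  forall s : nat,
    exists a : k, a != 0 /\
      irreducible_poly ('X^(p ^ s) - (a%:A)%:P : {poly K}).
Proof.
move=> pr nch nap hcyc K galK cycG s.
have [g gen] := cyclicP cycG.
have [a [a0 [h1 h2]]] : exists a : k, a != 0 /\ (forall b : K, b ^+ p != a%:A) /\
    (p = 2 -> forall b : K, a%:A != - 4 * b ^+ 4).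
  case: (eqVneq p 2) => [p2|p2].
    subst p; have [a [a0 [h1 h2]]] := @claim2 k K g galK gen nch nap hcyc.
    by exists a; split => //; split => // _.
  have [a [a0 h1]] := @claimA k K g galK gen p pr nap hcyc.
  by exists a; split => //; split => // /eqP; rewrite (negPf p2).
exists a; split => //.
exact: capelli pr h1 h2.
Qed.
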